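(* A Tychonoff space $X$ is pseudocompact if and only if the topological group $C_p(X,\mathbb{R})$ is TAP.
   Context: $C_p(X,\mathbb{R})$ is the additive group of all continuous real-valued functions on $X$ with the topology of pointwise convergence. A subset $A$ of a topological group $G$ is absolutely productive in $G$ if for every injection $a:\mathbb{N}\to A$ and every map $z:\mathbb{N}\to\mathbb{Z}$ the sequence $\left(\prod_{n=0}^{k}a(n)^{z(n)}\right)_{k\in\mathbb{N}}$ (sums, in additive notation) converges in $G$; $G$ is TAP if every absolutely productive subset of $G$ is finite. *)

(* Defs.v *)
From HB Require Import structures.
From mathcomp Require Import all_boot all_order all_algebra.
From mathcomp Require Import all_classical all_reals all_analysis.
Set Implicit Arguments. Unset Strict Implicit. Unset Printing Implicit Defensive.
Import Order.TTheory GRing.Theory Num.Theory numFieldNormedType.Exports.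
Local Open Scope classical_set_scope.
Local Open Scope ring_scope.

Definition tychonoff_space (X : topologicalType) : Prop :=
  hausdorff_space X /\ completely_regular_space X.

Definition pseudocompact (R : realType) (X : topologicalType) : Prop :=
  forall f : X -> R, continuous f -> exists M : R, forall x, `|f x| <= M.

Definition Cp (R : realType) (X : topologicalType) : set (X -> R) :=
  [set f | continuous f].

(* A subset A of C_p(X,R) is absolutely productive: for every injection
   a : nat -> A and every z : nat -> int, the partial sums
   sum_{n=0}^k z(n) a(n) converge in C_p(X,R), i.e. converge in the
   pointwise (product) topology {ptws X -> R} to a continuous function. *)
Definition abs_productive (R : realType) (X : topologicalType)
    (A : set (X -> R)) : Prop :=
  forall (a : nat -> (X -> R)) (z : nat -> int),
    injective a -> (forall n, A (a n)) ->
    exists g : X -> R, @Cp R X g /\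
      ((fun k : nat => ((fun x : X => \sum_(n < k.+1) (z n)%:~R * a n x)
                         : {ptws X -> R})) @ \oo --> (g : {ptws X -> R})).

Definition Cp_TAP (R : realType) (X : topologicalType) : Prop :=
  forall A : set (X -> R), A `<=` @Cp R X -> abs_productive A -> finite_set A.

(* Main.v *)
Require Import Defs.
From HB Require Import structures.
From mathcomp Require Import all_boot all_order all_algebra.
From mathcomp Require Import all_classical all_reals all_analysis.
From mathcomp Require Import ring lra.
Import Order.TTheory GRing.Theory Num.Theory numFieldNormedType.Exports.
Local Open Scope classical_set_scope.
Local Open Scope ring_scope.

Lemma ev_cvg (R : realType) (X : topologicalType) (S : nat -> X -> R) (g : X -> R) :
  ((fun k => (S k : {ptws X -> R})) @ \oo --> (g : {ptws X -> R})) ->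
  forall x, (fun k => S k x) @ \oo --> g x.
Proof. by move=> H; have [P _] := @pointwise_cvgP X R (S @ \oo) g _; apply: P. Qed.

Lemma cvg_ev (R : realType) (X : topologicalType) (S : nat -> X -> R) (g : X -> R) :
  (forall x, (fun k => S k x) @ \oo --> g x) ->
  ((fun k => (S k : {ptws X -> R})) @ \oo --> (g : {ptws X -> R})).
Proof. by move=> H; have [_ P] := @pointwise_cvgP X R (S @ \oo) g _; apply: P. Qed.

Lemma evconst (R : realType) (u : nat -> R) l v N :
  u @ \oo --> l -> (forall k, (N <= k)%N -> u k = v) -> l = v.
Proof.
move=> ul uv; have uv' : u @ \oo --> v by apply: cvg_near_cst; exists N.
exact: (cvg_unique _ ul uv').
Qed.

Lemma psum_stable (R : realType) (u : nat -> R) K :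
  (forall n, (K < n)%N -> u n = 0) ->
  forall k, (K <= k)%N -> \sum_(n < k.+1) u n = \sum_(n < K.+1) u n.
Proof.
move=> H; elim=> [|k IH]; first by rewrite leqn0 => /eqP ->.
rewrite leq_eqVlt => /orP[/eqP -> //|Kk].
by rewrite big_ord_recr /= H // addr0 IH.
Qed.

Lemma cont_sum (R : realType) (X : topologicalType) (F : nat -> X -> R) k :
  (forall n, continuous (F n)) -> continuous (fun y => \sum_(n < k) F n y).
Proof.
move=> H; elim: k => [|k IH].
  have -> : (fun y => \sum_(n < 0) F n y) = (fun=> 0) by apply: funext => y; rewrite big_ord0.
  exact: cst_continuous.
have -> : (fun y => \sum_(n < k.+1) F n y) = (fun y => \sum_(n < k) F n y) + F k.
  by apply: funext => y; rewrite big_ord_recr.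
move=> y; exact: (continuousD (IH y) (H k y)).
Qed.

Lemma bump_cont (R : realType) (X : topologicalType) (f : X -> R) (c : R) :
  continuous f -> continuous (fun y => Num.max 0 (2^-1 - `| `|f y| - c|)).
Proof.
move=> fc.
have phic : continuous (fun t : R => Num.max 0 (2^-1 - `| `|t| - c|)).
  move=> t; apply: (@continuous_max R R (fun=> 0) (fun t : R => 2^-1 - `| `|t| - c|)).
    exact: cst_continuous.
  apply: continuousB; first exact: cst_continuous.
  apply: (continuous_comp (f := fun t : R => `|t| - c)); last exact: norm_continuous.
  apply: continuousB; last exact: cst_continuous.
  exact: norm_continuous.
by move=> y; apply: (continuous_comp (fc y) (phic (f y))).
Qed.

Lemma inj_eventually (s : nat -> nat) : injective s ->
  forall N, exists K, forall n, (K <= n)%N -> (N <= s n)%N.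
Proof.
move=> sinj; elim=> [|N [K HK]]; first by exists 0%N.
case: (EM (exists n0, s n0 = N)) => [[n0 Hn0]|Hn].
  exists (maxn K n0.+1) => n; rewrite geq_max => /andP[Kn n0n].
  rewrite ltn_neqAle HK // andbT; apply/eqP => E.
  have : n = n0 by apply: sinj; rewrite Hn0.
  by move=> en; move: n0n; rewrite en ltnn.
exists K => n Kn; rewrite ltn_neqAle HK // andbT; apply/eqP => E.
by apply: Hn; exists n.
Qed.

Fixpoint cseq (R : realType) (X : Type) (f : X -> R) (xf : R -> X) (n : nat) : R :=
  if n is n'.+1 then `|f (xf (@cseq R X f xf n' + 1))| else `|f (xf 0)|.

Lemma tap_pc (R : realType) (X : topologicalType) : Cp_TAP R X -> pseudocompact R X.
Proof.
move=> tap f fc.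
case: (EM (exists M : R, forall x, `|f x| <= M)) => // nb; exfalso.
have big : forall M : R, exists x, M < `|f x|.
  move=> M; case: (EM (exists x, M < `|f x|)) => // H; exfalso; apply: nb.
  exists M => x; rewrite leNgt; apply/negP => Hx; apply: H; by exists x.
have [xf Hxf] := choice big.
pose c := @cseq R X f xf.
pose p n := if n is n'.+1 then xf (c n' + 1) else xf 0.
have cp : forall n, c n = `|f (p n)| by case.
have cS : forall n, c n + 1 < c n.+1 by move=> n; exact: Hxf.
have c0 : forall n, 0 <= c n by move=> n; rewrite cp.
have cgap : forall m k, c m + 1 < c (m + k).+1.
  move=> m; elim=> [|k IH]; first by rewrite addn0.
  rewrite addnS; have := cS (m + k).+1; have := c0 m; lra.
have cdist : forall m n, m <> n -> 1 < `|c m - c n|.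
  have H1 : forall m n, (m < n)%N -> 1 < `|c m - c n|.
    move=> m n mn; have := cgap m (n - m.+1)%N; rewrite -addSn addnC subnK //.
    move=> H; rewrite distrC; apply: (lt_le_trans _ (ler_norm _)); lra.
  move=> m n mn; case: (ltngtP m n) => [|nm|E]; [exact: H1| |by []].
  by rewrite distrC; apply: H1.
have cnat : forall n, n%:R <= c n.
  elim=> [|n IH]; first exact: c0.
  rewrite mulrSr; have := cS n; lra.
pose h n y := Num.max 0 (2^-1 - `| `|f y| - c n|).
have hcont : forall n, continuous (h n) by move=> n; exact: bump_cont.
have h_zero : forall n y, 2^-1 <= `| `|f y| - c n| -> h n y = 0.
  by move=> n y H; rewrite /h max_l // subr_le0.
have hpp : forall n, h n (p n) = 2^-1.
  by move=> n; rewrite /h -cp subrr normr0 subr0 max_r // invr_ge0.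
have hinj : injective h.
  move=> m n E; case: (EM (m = n)) => // mn; exfalso.
  have := congr1 (fun g => g (p n)) E; rewrite /= hpp h_zero.
    by move=> /esym/eqP; rewrite invr_eq0 pnatr_eq0.
  by rewrite -cp distrC; apply/ltW; apply: (le_lt_trans _ (cdist _ _ mn)); lra.
suff fin : finite_set (range h).
  have inf : infinite_set (range h).
    apply/infiniteP; apply/pcard_leP; apply/injfunPex; exists h.
      by move=> n _; exists n.
    by move=> m n _ _; exact: hinj.
  exact: inf fin.
apply: tap.
- by move=> _ [n _ <-]; exact: hcont.
- move=> a z ainj aA.
  have : forall n, exists m, h m = a n by move=> n; have [m _ ?] := aA n; exists m.
  move=> /choice [s Hs].
  have sinj : injective s by move=> m n E; apply: ainj; rewrite -!Hs E.
  have Fc : forall n, continuous (fun y => (z n)%:~R * a n y).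
    move=> n; rewrite -(Hs n) => y0.
    rewrite /continuous_at; apply: (@cvgMl_tmp R X (nbhs y0) _ (h (s n))); exact: hcont.
  have [Kf HKf] := choice (@inj_eventually s sinj).
  pose N y := (Num.truncn `|f y|).+2.
  have hvan : forall m y, (N y <= m)%N -> h m y = 0.
    move=> m y Hm; apply: h_zero.
    have h1 : (N y)%:R <= c m by apply: le_trans (cnat m); rewrite ler_nat.
    have h2 : `|f y| < (Num.truncn `|f y|).+1%:R by apply: real_truncnS_gt; exact: num_real.
    have h3 : (N y)%:R = (Num.truncn `|f y|).+1%:R + 1 :> R by rewrite /N mulrSr.
    rewrite distrC; apply: le_trans (ler_norm _); lra.
  have avan : forall K' y, (forall n, (K' <= n)%N -> (N y <= s n)%N) ->
      forall n, (K' <= n)%N -> a n y = 0.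
    by move=> K' y HK n Hn; rewrite -Hs hvan // HK.
  pose S k y := \sum_(n < k.+1) (z n)%:~R * a n y.
  have stab : forall K' y, (forall n, (K' <= n)%N -> a n y = 0) ->
      forall k, (K' <= k)%N -> S k y = S K' y.
    move=> K' y H k Hk; apply: (@psum_stable R (fun n => (z n)%:~R * a n y)) => //.
    by move=> n Kn; rewrite H ?mulr0 // ltnW.
  pose g y := S (Kf (N y)) y.
  exists g; split; last first.
    apply: cvg_ev => y; apply: cvg_near_cst; exists (Kf (N y)) => // k /= Hk.
    by apply: stab => //; apply: avan; exact: HKf.
  move=> y.
  pose N' := (Num.truncn (`|f y| + 1)).+2.
  pose K' := Kf N'.
  have Hnear : \forall y' \near y, S K' y' = g y'.
    near=> y'.
    have Hy' : `|f y - f y'| < 1.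
      by near: y'; apply: ((cvgrPdist_lt _ _).1 (fc y) 1 ltr01).
    have NN : (N y' <= N')%N.
      rewrite /N /N' ltnS ltnS; apply: le_truncn.
      have := lerB_dist (f y') (f y); rewrite distrC; lra.
    have av1 : forall n, (K' <= n)%N -> a n y' = 0.
      apply: avan => n Hn; apply: leq_trans NN _; exact: HKf.
    have av2 : forall n, (Kf (N y') <= n)%N -> a n y' = 0.
      by apply: avan => n Hn; exact: HKf.
    rewrite /g -(stab _ _ av1 (maxn K' (Kf (N y')))) ?leq_maxl //.
    by rewrite (stab _ _ av2 (maxn K' (Kf (N y')))) ?leq_maxr.
  have gy : g y = S K' y by rewrite (nbhs_singleton Hnear).
  apply: cvg_trans (near_eq_cvg Hnear) _.
  rewrite gy; exact: (@cont_sum R X (fun n y => (z n)%:~R * a n y) K'.+1 Fc y).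
Unshelve. all: by end_near. Qed.

Fixpoint sub_idx (G : nat -> nat) (k : nat) : nat :=
  if k is k'.+1 then maxn (sub_idx G k').+1 (G (sub_idx G k')) else 0%N.

Fixpoint Pf (nc : nat -> (nat -> int) -> int) (k : nat) : nat -> int :=
  if k is k'.+1 then fun j => if j == k' then nc k' (Pf nc k') else Pf nc k' j
  else fun _ => 0.

Lemma Pf_val nc k j : (j < k)%N -> Pf nc k j = nc j (Pf nc j).
Proof.
elim: k => [//|k IH]; rewrite ltnS leq_eqVlt => /orP[/eqP ->|jk] /=.
  by rewrite eqxx.
by rewrite (ltn_eqF jk) IH.
Qed.

Lemma pc_tap (R : realType) (X : topologicalType) : pseudocompact R X -> Cp_TAP R X.
Proof.
move=> pc A ACp Aap; apply: contrapT => Ainf.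
have A'inf := infinite_setD Ainf (finite_set1 (0 : X -> R)).
have := (infiniteP _).1 A'inf => /(elimT pcard_leP)/injfunPex [b bfun binj'].
have binj : injective b by move=> m n E; apply: binj'; rewrite ?inE.

have bA : forall n, A (b n) by move=> n; have [] := bfun n I.
have bnz : forall n, b n <> 0 by move=> n; have [] := bfun n I.
have L1 : forall x, exists N, forall n, (N <= n)%N -> b n x = 0.
  move=> x; apply: contrapT => H.
  have Hinf : forall N, exists n, (N <= n)%N /\ b n x != 0.
    move=> N; apply: contrapT => H2; apply: H; exists N => n Nn.
    apply/eqP; apply: contrapT => H3; apply: H2; exists n; split => //; exact/negP.
  pose z n : int := if b n x == 0 then 0 else Posz (Num.truncn (`|b n x|^-1)).+1.
  have [g [_ Hg]] := Aap b z binj bA.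
  have h2 : (0:R) < 2^-1 by rewrite invr_gt0.
  have := (cvgrPdist_lt _ _).1 (@ev_cvg R X _ g Hg x) (2^-1) h2.
  move=> [K _ HK].
  have [n [Kn bn]] := Hinf K.+1.
  case: n Kn bn => [//|m] Kn bn.
  have e1 := HK m.+1 (ltnW Kn).
  have e2 := HK m Kn.
  move: e1 e2 => /=; rewrite big_ord_recr /=.
  set Sm := \sum_(i < m.+1) _.
  set zb := _ * b m.+1 x.
  have zb1 : 1 < `|zb|.
    rewrite /zb /z (negbTE bn) normrM.
    have -> : ((Posz (Num.truncn `|b m.+1 x|^-1).+1)%:~R : R) = (Num.truncn `|b m.+1 x|^-1).+1%:R by [].
    rewrite normr_nat.
    have bp : 0 < `|b m.+1 x| by rewrite normr_gt0.
    rewrite -[X in X < _](@mulVf _ `|b m.+1 x|) ?normr_eq0 // ltr_pM2r //.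
    apply: real_truncnS_gt; exact: num_real.
  move=> e1 e2.
  have := ler_normB (g x - Sm) (g x - (Sm + zb)).
  have -> : g x - Sm - (g x - (Sm + zb)) = zb by ring.
  lra.
have [Nf HNf] := choice L1.
have xpE : forall n, exists x, b n x != 0.
  move=> n; apply: contrapT => H; apply: (bnz n); apply: funext => x.
  apply/eqP; apply: contrapT => H2; apply: H; exists x; exact/negP.
have [xp Hxp] := choice xpE.
pose ns := sub_idx (fun n => Nf (xp n)).
have nsS : forall k, (ns k < ns k.+1)%N by move=> k; rewrite /ns /= leq_maxl.
have nsG : forall k, (Nf (xp (ns k)) <= ns k.+1)%N by move=> k; rewrite /ns /= leq_maxr.
have nsmono : {homo ns : i j / (i < j)%N}.
  apply: (@homo_ltn _ ns (fun a b => (a < b)%N)) => // ? ? ?; exact: ltn_trans.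
have nsinj : injective ns.
  move=> i j E; case: (ltngtP i j) => // [ij|ji].
    by have := nsmono _ _ ij; rewrite E ltnn.
  by have := nsmono _ _ ji; rewrite E ltnn.
have nsle : forall k j, (k < j)%N -> (ns k.+1 <= ns j)%N.
  move=> k j; rewrite leq_eqVlt => /orP[/eqP<-//|kj]; exact: ltnW (nsmono _ _ kj).
pose b' k := b (ns k).
pose y k := xp (ns k).
have b'inj : injective b' by move=> i j /binj /nsinj.
have Tkk : forall k, b' k (y k) != 0 by move=> k; exact: Hxp.
have Tvan : forall k j, (k < j)%N -> b' j (y k) = 0.
  move=> k j kj; apply: HNf; exact: leq_trans (nsG k) (nsle k j kj).
pose newc k (f : nat -> int) : int :=
  Posz (Num.truncn ((k%:R + `|\sum_(j < k) (f j)%:~R * b' j (y k)|) / `|b' k (y k)|)).+1.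
pose c j := Pf newc j.+1 j.
have key : forall k, k%:R <= `|\sum_(j < k.+1) (c j)%:~R * b' j (y k)|.
  move=> k; rewrite big_ord_recr /=.
  set s := \sum_(j < k) _.
  have sE : s = \sum_(j < k) ((Pf newc k j)%:~R * b' j (y k)).
    by apply: eq_bigr => j _; rewrite /c !Pf_val ?ltn_ord.
  have ck : c k = newc k (Pf newc k) by rewrite /c Pf_val.
  rewrite ck /newc -sE.
  set t := Num.truncn _.
  have -> : ((Posz t.+1)%:~R : R) = t.+1%:R by [].
  have Tp : 0 < `|b' k (y k)| by rewrite normr_gt0.
  have ht : (k%:R + `|s|) / `|b' k (y k)| < t.+1%:R.
    by apply: real_truncnS_gt; exact: num_real.
  have h3 : k%:R + `|s| < t.+1%:R * `|b' k (y k)| by rewrite -ltr_pdivrMr.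
  have := lerB_dist (t.+1%:R * b' k (y k)) (- s).
  rewrite normrN opprK normrM normr_nat addrC; lra.
have [g [gC Hg]] := Aap b' c b'inj (fun k => bA _).
have gy : forall k, g (y k) = \sum_(j < k.+1) (c j)%:~R * b' j (y k).
  move=> k; apply: (@evconst R _ _ _ k (@ev_cvg R X _ g Hg (y k))) => K kK.
  apply: (@psum_stable R (fun j => (c j)%:~R * b' j (y k)) k) => // j kj.
  by rewrite Tvan // mulr0.
have [M HM] := pc g gC.
pose k := (Num.truncn M).+1.
have Mk : M < k%:R by apply: real_truncnS_gt; exact: num_real.
have := HM (y k); have := key k; rewrite -gy; lra.
Qed.

Theorem theorem5p3 (R : realType) (X : topologicalType) :
  tychonoff_space X -> (pseudocompact R X <-> Cp_TAP R X).
Proof.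
move=> _; split; [exact: pc_tap | exact: tap_pc].
Qed.
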